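(* For every $\varepsilon>0$ there is $M$ such that for every finite abelian group $F$ of group exponent at least $3$ with $|F|\ge M$, \[\left|\frac{|G_F|^{-1}\sum_{\sigma\in G_F}D_{\rm sym}(\sigma)}{|\mathcal S_F|}-1\right|<\varepsilon ;\] that is, $\lim_{|F|\to\infty}\frac{|G_F|^{-1}\sum_{\sigma\in G_F}D_{\rm sym}(\sigma)}{|\mathcal S_F|}=1$ over the family of finite abelian groups of exponent $\ge 3$, uniformly in the group order.
   Context: Let $F$ be a finite abelian group, written additively; its group exponent is the least $m\ge1$ with $mf=0$ for all $f\in F$. The configuration space is $G_F=\{-1,1\}^F$. The group $\mathcal S_F=\{-1,1\}\times(F\rtimes\{-1,1\})$, where $r\in\{-1,1\}$ acts on $F$ by $f\mapsto rf$, has order $4|F|$ and acts on $G_F$ by $\Phi_{(s,t,r)}(\sigma)_f=s\,\sigma_{rf+t}$ for $s,r\in\{-1,1\}$, $t\in F$. The symmetry-induced degeneracy of $\sigma\in G_F$ is $D_{\rm sym}(\sigma)=|\{\Phi_g(\sigma): g\in\mathcal S_F\}|$, the cardinality of the orbit of $\sigma$. *)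

(* Defs.v *)
From HB Require Import structures.
From mathcomp Require Import all_boot all_order all_algebra all_fingroup.
From mathcomp Require Import cyclic.
Set Implicit Arguments. Unset Strict Implicit. Unset Printing Implicit Defensive.
Import GRing.Theory.
Local Open Scope ring_scope.

(* Conventions: a sign in {-1,1} is encoded as a bool, with
   false = +1 and true = -1.  Multiplication of signs is xor (+),
   and r * f for r a sign and f in F is [sgn_act r f]. *)

Definition sgn_act (F : zmodType) (r : bool) (f : F) : F := if r then - f else f.

Lemma gexponent_ex (F : finZmodType) :
  exists m, (0 < m)%N && [forall f : F, f *+ m == 0].
Proof.
exists #|F|; apply/andP; split; first by apply/card_gt0P; exists 0.
apply/forallP => f; apply/eqP.
have := @expg_cardG _ [set: F]%G f (in_setT f).
by rewrite cardsT.
Qed.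

Definition gexponent (F : finZmodType) : nat := ex_minn (gexponent_ex F).

Definition config (F : finZmodType) := {ffun F -> bool}.

(* Symmetry group S_F = {-1,1} x (F ⋊ {-1,1}), elements (s, t, r). *)
Definition symgrp (F : finZmodType) := (bool * F * bool)%type.

Definition Phi (F : finZmodType) (g : symgrp F) (sigma : config F) : config F :=
  [ffun f => g.1.1 (+) sigma (sgn_act g.2 f + g.1.2)].

Definition Dsym (F : finZmodType) (sigma : config F) : nat :=
  #|[set Phi g sigma | g : symgrp F]|.

(* Main.v *)
Require Import Defs.
From HB Require Import structures.
From mathcomp Require Import all_boot all_order all_algebra all_fingroup.
From mathcomp Require Import reals.
From mathcomp Require Import zify ring.
Import Order.TTheory GRing.Theory Num.Theory.
Local Open Scope ring_scope.
Lemma fix_bound (F : finType) (pi rho : F -> F) (s : bool) :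
  cancel pi rho ->
  (2 * #|[set f | pi f == f]| <= #|F|)%N ->
  (#|[set sigma : {ffun F -> bool} | [forall f, sigma f == s (+) sigma (pi f)]]|
     * 2 ^ (#|F| %/ 6) <= 2 ^ #|F|)%N.
Proof.
move=> piK hfix.
pose P := fun A : {set F} => [forall f in A, pi f \notin A].
have P0 : P set0 by apply/forall_inP => f; rewrite inE.
case: (@arg_maxnP {set F} set0 P (fun B => #|B|) P0) => A PA Amax.
set Fx := [set f | pi f == f] in hfix *.
have cover : (#|F| <= 3 * #|A| + #|Fx|)%N.
  have sub : [set: F] \subset (A :|: Fx) :|: (pi @: A :|: rho @: A).
    apply/subsetP => f _.
    case fA: (f \in A); first by rewrite !inE fA.
    case fF: (pi f == f); first by rewrite !inE fF orbT.
    have: ~~ P (f |: A).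
      apply/negP => Pf; have := Amax _ Pf.
      by rewrite cardsU1 fA /=; lia.
    case/forall_inPn => x; rewrite !inE => /orP[/eqP->|xA].
      move/negbNE/orP=> [/eqP pff|pfA]; first by rewrite pff eqxx in fF.
      by rewrite -[f]piK imset_f ?orbT.
    move/negbNE/orP=> [/eqP pxf|pxA]; first by rewrite -pxf imset_f ?orbT.
    by move/forall_inP: PA => /(_ x xA); rewrite pxA.
  have := subset_leq_card sub; rewrite cardsT.
  move=> h; apply: (leq_trans h).
  apply: (leq_trans ((leq_card_setU _ _)).1).
  have h1 := (leq_card_setU A Fx).1.
  have h2 := (leq_card_setU (pi @: A) (rho @: A)).1.
  have h3 := leq_imset_card pi A.
  have h4 := leq_imset_card rho A.
  lia.
have Ak : (#|F| %/ 6 <= #|A|)%N by lia.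
set Fix := [set sigma : {ffun F -> bool} | [forall f, sigma f == s (+) sigma (pi f)]].
pose h (sigma : {ffun F -> bool}) := [ffun f => (f \notin A) && sigma f].
have hinj : {in Fix &, injective h}.
  move=> s1 s2; rewrite !inE => /forallP H1 /forallP H2 eqh.
  apply/ffunP => f.
  have e : forall x, x \notin A -> s1 x = s2 x.
    by move=> x xA; have := congr1 (fun g : {ffun F -> bool} => g x) eqh; rewrite /h !ffunE xA.
  case fA: (f \in A); last by rewrite e ?fA.
  have pfA : pi f \notin A by move/forall_inP: PA => /(_ f fA).
  by rewrite (eqP (H1 f)) (eqP (H2 f)) e.
have himg : h @: Fix \subset pffun_on false (~: A) predT.
  apply/subsetP => _ /imsetP[sg _ ->]; apply/pffun_onP; split.
    by apply/supportP => x; rewrite inE negbK ffunE => ->.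
  by move=> b _.
have := subset_leq_card himg; rewrite card_in_imset // card_pffun_on card_bool => hc.
apply: (leq_trans (leq_mul hc (leq_pexp2l (isT : (0 < 2)%N) Ak))).
by rewrite -expnD addnC cardsC.
Qed.
Lemma exp3_elem (F : finZmodType) : (3 <= gexponent F)%N -> exists x : F, x + x != 0.
Proof.
move=> h; apply/existsP; apply: contraLR h; rewrite negb_exists => /forallP H.
rewrite -leqNgt /gexponent; case: ex_minnP => m _ hmin; apply: hmin.
apply/andP; split => //; apply/forallP => f; rewrite mulr2n; exact: negbNE (H f).
Qed.

Lemma half_bound (F : finZmodType) (x t : F) : x + x != 0 ->
  (2 * #|[set f : F | (f + f == t)%R]| <= #|F|)%N.
Proof.
move=> hx; set S := [set f : F | f + f == t].
have dis : [disjoint S & [set x + f | f in S]].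
  rewrite disjoints_subset; apply/subsetP => f; rewrite !inE => /eqP hf.
  apply/imsetP => -[f' f'S ef].
  move: f'S; rewrite inE => /eqP hf'; move: hf.
  rewrite ef -hf' => /eqP; rewrite addrACA -subr_eq0 addrK; exact/negP.
have := (leq_card_setU S [set x + f | f in S]); rewrite dis => -[h1 /eqP h2].
rewrite card_imset in h2; last exact: addrI.
apply: leq_trans (max_card (S :|: [set x + f | f in S])); by rewrite h2 mul2n -addnn.
Qed.
Lemma phi_coll (F : finZmodType) (g h : symgrp F) (sg : config F) :
  g != h -> Phi g sg = Phi h sg ->
  exists g' : symgrp F, (g' != (false, 0, false)) && (Phi g' sg == sg).
Proof.
case: g => [[s t] r]; case: h => [[s' t'] r'] hne heq.
exists (s (+) s', t' - sgn_act (r (+) r') t, r (+) r'); apply/andP; split.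
  apply: contra hne => /eqP [] ss tt rr.
  have ? : s = s' by destruct s, s'.
  have ? : r = r' by destruct r, r'.
  subst; move/eqP: tt; rewrite addbb /= subr_eq0 => /eqP ->; by [].
apply/eqP/ffunP => u; rewrite ffunE /=.
have := congr1 (fun x : config F => x (sgn_act r (u - t))) heq.
rewrite !ffunE /=.
have -> : sgn_act r (sgn_act r (u - t)) + t = u by destruct r; rewrite /= ?opprK subrK.
move=> e; rewrite -[sg u](addKb s) e addbA.
congr (_ (+) sg _).
destruct r, r'; rewrite /= ?opprK ?opprB ?opprD.
- by rewrite addrA addrAC.
- by rewrite [t - u]addrC -addrA [t + t']addrC.
- by rewrite [t - u]addrC -addrA [t + t']addrC.
- by rewrite addrA addrAC.
Qed.

Lemma fixg_bound (F : finZmodType) (g : symgrp F) :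
  (3 <= gexponent F)%N -> g != (false, 0, false) ->
  (#|[set sg : config F | Phi g sg == sg]| * 2 ^ (#|F| %/ 6) <= 2 ^ #|F|)%N.
Proof.
move=> hexp; case: g => [[s t] r] hg.
case: (boolP ((r == false) && (t == 0))) => [/andP[/eqP rf /eqP t0]|hrt].
  subst; have hs : s = true by move: hg; case: s; rewrite ?eqxx.
  subst; rewrite (_ : [set sg : config F | _] = set0) ?cards0 //.
  apply/setP => sg; rewrite !inE; apply/negbTE/eqP => /ffunP/(_ 0).
  by rewrite ffunE /= addr0; case: (sg 0).
have eqset : [set sg : config F | Phi (s, t, r) sg == sg] =
    [set sg : {ffun F -> bool} | [forall f, sg f == s (+) sg (sgn_act r f + t)]].
  apply/setP => sg; rewrite !inE; apply/eqP/forallP => [H f|H].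
    by rewrite -{1}H ffunE.
  by apply/ffunP => f; rewrite ffunE /=; apply/esym/eqP/H.
rewrite eqset.
apply: (@fix_bound _ _ (fun x => sgn_act r (x - t))).
  by move=> f; rewrite addrK; by destruct r; rewrite /= ?opprK.
clear eqset; case: r {hg} hrt => /= hrt.
  have [x hx] := @exp3_elem F hexp.
  apply: leq_trans (@half_bound F x t hx); rewrite leq_mul2l /=.
  apply: subset_leq_card; apply/subsetP => f; rewrite !inE => /eqP e.
  by rewrite -{1}e addrAC addNr add0r.
rewrite (_ : [set f | _] = set0) ?cards0 //.
  apply/setP => f; rewrite !inE /= -{2}[f]addr0; apply/negbTE.
  by rewrite (inj_eq (addrI f)).
Qed.

Lemma count_main (F : finZmodType) : (3 <= gexponent F)%N ->
  (\sum_(sigma : config F) Dsym sigma <= #|{: symgrp F}| * #|{: config F}|)%N /\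
  ((#|{: symgrp F}| * #|{: config F}| - \sum_(sigma : config F) Dsym sigma)
     * 2 ^ (#|F| %/ 6) <= #|{: symgrp F}| * #|{: symgrp F}| * #|{: config F}|)%N.
Proof.
move=> hexp.
set S := #|{: symgrp F}|; set N := #|{: config F}|.
have Dle : forall sg : config F, (Dsym sg <= S)%N by move=> sg; exact: leq_imset_card.
have sumS : (\sum_(sg : config F) S = S * N)%N by rewrite sum_nat_const mulnC.
split.
  by rewrite -sumS; apply: leq_sum => sg _; exact: Dle.
pose e : symgrp F := (false, 0, false).
pose Bad := [set sg : config F | [exists g : symgrp F, (g != e) && (Phi g sg == sg)]].
have Deq : forall sg, sg \notin Bad -> Dsym sg = S.
  move=> sg hsg; rewrite /Dsym card_imset // => g h eq.
  apply/eqP; apply/negPn/negP => ne; have [g' H] := @phi_coll F g h sg ne eq.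
  by move: hsg; rewrite inE => /existsPn/(_ g'); rewrite /e H.
have step1 : (S * N - \sum_(sg : config F) Dsym sg <= #|Bad| * S)%N.
  rewrite -sumS -sumnB; last by move=> sg _; exact: Dle.
  rewrite (bigID (mem Bad)) /= [X in (_ + X)%N]big1 ?addn0; last by move=> sg hs; rewrite Deq ?subnn.
  rewrite -sum_nat_const; apply: leq_sum => sg _; exact: leq_subr.
have step2 : (#|Bad| * 2 ^ (#|F| %/ 6) <= S * N)%N.
  have hB : (#|Bad| <= \sum_(g | g != e) #|[set sg : config F | Phi g sg == sg]|)%N.
    rewrite -sum1_card.
    apply: (@leq_trans (\sum_(sg in Bad) \sum_(g | g != e) (Phi g sg == sg : nat))).
      apply: leq_sum => sg; rewrite inE => /existsP[g /andP[ge H]].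
      by rewrite (bigD1 g) //= H leq_addr.
    apply: (@leq_trans (\sum_(sg : config F) \sum_(g | g != e) (Phi g sg == sg : nat))).
      by rewrite [in leqRHS](bigID (mem Bad)) /= leq_addr.
    rewrite exchange_big /=; apply: leq_sum => g _.
    by rewrite -sum1dep_card [in leqRHS]big_mkcond /=; apply: eq_leq; apply: eq_bigr => sg _; case: (_ == _).
  apply: leq_trans (leq_mul hB (leqnn _)) _.
  rewrite big_distrl /=.
  apply: (@leq_trans (\sum_(g | g != e) N)).
    apply: leq_sum => g ge; rewrite /N card_ffun card_bool; exact: fixg_bound.
  by rewrite sum_nat_cond_const leq_mul2r max_card orbT.
apply: leq_trans (leq_mul step1 (leqnn _)) _.
rewrite mulnAC.
have := leq_mul (leqnn S) step2.
by rewrite [in leqLHS]mulnC !mulnA.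
Qed.
Lemma sq_le_exp m : (4 <= m)%N -> (m * m <= 2 ^ m)%N.
Proof.
elim: m => // m IH h.
case: (ltngtP m 3) => hm; first lia.
  rewrite expnS; have := IH hm; nia.
by rewrite hm.
Qed.

Lemma grow (K : nat) : exists M : nat, forall n, (M <= n)%N -> (4 * n * K <= 2 ^ (n %/ 6))%N.
Proof.
exists (6 * (44 * K + 4))%N => n hn.
have hm : (44 * K + 4 <= n %/ 6)%N by rewrite leq_divRL //; lia.
apply: (@leq_trans ((n %/ 6) * (n %/ 6))); last by apply: sq_le_exp; lia.
have h1 : (n <= 11 * (n %/ 6))%N by lia.
nia.
Qed.

Lemma real_part (R : realType) (eps : R) (a N S P K : R) :
  0 < eps -> 0 < N -> 0 < S -> 0 < P -> 0 < K ->
  a <= S * N -> (S * N - a) * P <= S * S * N -> S * K <= P -> 1 < eps * K ->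
  `| a / N / S - 1 | < eps.
Proof.
move=> e0 N0 S0 P0 K0 ha h2 hK he.
have SN0 : 0 < S * N by rewrite mulr_gt0.
set y := 1 - a / N / S.
have hy : y * (S * N) = S * N - a.
  by rewrite /y mulrBl mul1r; congr (_ - _); field; rewrite ?gt_eqF.
have y0 : 0 <= y.
  rewrite /y subr_ge0 -mulrA -invfM ler_pdivrMr // ?mul1r 1?mulrC //; by rewrite mulr_gt0.
rewrite distrC ger0_norm //.
have h3 : y * P <= S.
  rewrite -(ler_pM2r SN0) mulrAC hy mulrA; exact: h2.
have h4 : y * K <= 1.
  rewrite -(ler_pM2r P0) mul1r mulrAC; apply: le_trans hK.
  by rewrite ler_pM2r.
rewrite -(ltr_pM2r K0); exact: le_lt_trans h4 he.
Qed.

Theorem mainTheorem1 (R : realType) (eps : R) :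
  0 < eps ->
  exists M : nat, forall F : finZmodType,
    (3 <= gexponent F)%N -> (M <= #|F|)%N ->
    `| ((\sum_(sigma : config F) (Dsym sigma)%:R) / (#|{: config F}|%:R : R))
         / (#|{: symgrp F}|%:R) - 1 | < eps.
Proof.
move=> e0.
pose K := Num.bound eps^-1.
have hK : eps^-1 < K%:R by apply: archi_boundP; rewrite invr_ge0 ltW.
have K0 : 0 < (K%:R : R) by apply: lt_trans hK; rewrite invr_gt0.
have [M HM] := grow K.
exists M => F hexp hM.
have [hA h2] := @count_main F hexp.
have n0 : (0 < #|F|)%N by apply/card_gt0P; exists 0.
have eS : #|{: symgrp F}| = (4 * #|F|)%N.
  by rewrite /symgrp !card_prod card_bool mulnC mulnA.
have eN : #|{: config F}| = (2 ^ #|F|)%N by rewrite card_ffun card_bool.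
rewrite -natr_sum.
apply: (@real_part R eps _ _ _ ((2 ^ (#|F| %/ 6))%:R) (K%:R)) => //.
- by rewrite eN ltr0n expn_gt0.
- by rewrite eS ltr0n muln_gt0 n0.
- by rewrite ltr0n expn_gt0.
- by rewrite -natrM ler_nat.
- by rewrite -natrM -natrB // -!natrM ler_nat.
- by rewrite -natrM ler_nat eS; apply: HM.
- by rewrite -(ltr_pM2l e0) mulfV ?gt_eqF in hK.
Qed.
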